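(* Let $D=(V,E;s,t)$, $N$, $M$ be as in the context, let $x\in\mathcal{C}(\widetilde\Gamma_D)$ and let $\phi_x$ be its potential. Then $(x,\phi_x)$ satisfies (a) $x(e)+\phi_x(u)-\phi_x(v)\ge0$ for all $e=(u,v)\in N$; (b) $\phi_x(u)-\phi_x(v)\ge0$ for all $e=(u,v)\in M$; (c) $\phi_x(s)=0$; (d) $\phi_x(t)=1$. Moreover, for every arc $e=(u,v)\in E$ such that some maximum-cardinality family of $s$-$t$ paths pairwise disjoint on $N$ has a path containing $e$, equality holds in (a) if $e\in N$ and in (b) if $e\in M$.
   Context: $D=(V,E;s,t)$ is a directed network with unit arc capacities (parallel arcs allowed); $N\subseteq E$ is the set of private arcs (players), $M=E\setminus N$ public arcs; every $s$-$t$ path contains an arc of $N$ and every arc lies on some $s$-$t$ path. Two paths are disjoint on $N$ if they share no arc of $N$; $\sigma_N$ is the maximum number of $s$-$t$ paths pairwise disjoint on $N$. For $S\subseteq N$, $\gamma(S)$ is the maximum number of pairwise arc-disjoint $s$-$t$ paths in $D_S=(V,S\cup M;s,t)$. The auxiliary game $\widetilde\Gamma_D=(N,\tilde\gamma)$ has $\tilde\gamma(N)=\sigma_N$, $\tilde\gamma(S)=\gamma(S)$ for $S\subsetneq N$; $\chi(\widetilde\Gamma_D)=\{x\in\mathbb{R}^N_{\ge0}:x(N)=\sigma_N\}$ and $\mathcal{C}(\widetilde\Gamma_D)=\{x\in\chi(\widetilde\Gamma_D): x(S)\ge\tilde\gamma(S)\ \forall S\subseteq N\}$ with $x(S)=\sum_{i\in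 S}x_i$. For $x\in\chi(\widetilde\Gamma_D)$, its potential $\phi_x\in\mathbb{R}^V$ is defined by giving each arc $e\in N$ length $x(e)$ and each arc of $M$ length $0$, and letting $\phi_x(v)$ be the length of a shortest $s$-$v$ path. *)

(* Defs.v *)
From HB Require Import structures.
From mathcomp Require Import all_boot all_order all_algebra.
From mathcomp Require Import boolp.
Set Implicit Arguments. Unset Strict Implicit. Unset Printing Implicit Defensive.
Import Order.TTheory GRing.Theory Num.Theory.

(* A directed multigraph: arcs E (finite type, parallel arcs allowed),
   vertices V, each arc e goes from tl e to hd e. *)
Section Net.
Variables (V E : finType) (tl hd : E -> V).

Fixpoint is_walk (u : V) (p : seq E) (v : V) : bool :=
  match p with
  | [::] => u == v
  | e :: p' => (tl e == u) && is_walk (hd e) p' v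
  end.

Definition is_path (u : V) (p : seq E) (v : V) : bool :=
  is_walk u p v && uniq (u :: map hd p).

Definition arc_disjoint_family (A : {set E}) (s t : V) (F : seq (seq E)) : Prop :=
  (forall p, p \in F -> is_path s p t /\ {subset p <= A}) /\
  pairwise (fun p q => ~~ has (fun e => e \in q) p) F.

Definition N_disjoint_family (N : {set E}) (s t : V) (F : seq (seq E)) : Prop :=
  (forall p, p \in F -> is_path s p t) /\
  pairwise (fun p q => ~~ has (fun e => (e \in q) && (e \in N)) p) F.

(* sigma_N : maximum number of s-t paths pairwise disjoint on N
   (bounded by #|E| under the standing assumptions) *)
Definition sigmaN (N : {set E}) (s t : V) : nat :=
  \max_(k < #|E|.+1 | `[< exists F, N_disjoint_family N s t F /\ size F = k >]) k.

(* gamma(S): max number of pairwise arc-disjoint s-t paths in D_S = (V, S u M) *)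
Definition gamma (N S : {set E}) (s t : V) : nat :=
  \max_(k < #|E|.+1 |
        `[< exists F, arc_disjoint_family (S :|: ~: N) s t F /\ size F = k >]) k.

Definition gamma_tilde (N S : {set E}) (s t : V) : nat :=
  if S == N then sigmaN N s t else gamma N S s t.

Variable R : realFieldType.
Local Open Scope ring_scope.

(* x in R^N is represented by x : E -> R; only its values on N are used. *)
Definition xsum (x : E -> R) (S : {set E}) : R := \sum_(e in S) x e.

Definition in_core (N : {set E}) (s t : V) (x : E -> R) : Prop :=
  (forall e, e \in N -> 0 <= x e) /\
  xsum x N = (sigmaN N s t)%:R /\
  (forall S : {set E}, S \subset N -> (gamma_tilde N S s t)%:R <= xsum x S).

Definition plen (N : {set E}) (x : E -> R) (p : seq E) : R :=
  \sum_(e <- p | e \in N) x e.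

Definition is_potential (N : {set E}) (s : V) (x : E -> R) (phi : V -> R) : Prop :=
  forall v, (exists p, is_path s p v) ->
    (exists2 p, is_path s p v & phi v = plen N x p) /\
    (forall p, is_path s p v -> phi v <= plen N x p).

End Net.

(* Main.v *)
Require Import Defs.
From HB Require Import structures.
From mathcomp Require Import all_boot all_order all_algebra.
From mathcomp Require Import boolp.
From mathcomp Require Import lra.
Set Implicit Arguments. Unset Strict Implicit.
Import Order.TTheory GRing.Theory Num.Theory.
Local Open Scope ring_scope.

Lemma walk_cat (V E : finType) (tl hd : E -> V) p1 p2 u v :
  is_walk tl hd u (p1 ++ p2) v <-> exists w, is_walk tl hd u p1 w /\ is_walk tl hd w p2 v.
Proof.
elim: p1 u => [|e p1 IH] u /=.
  split; first by move=> H; exists u; rewrite eqxx.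
  by case=> w [/eqP <-].
split.
  case/andP=> He /IH [w [H1 H2]]; exists w; by rewrite He H1.
case=> w [/andP [He H1] H2]; rewrite He /=; apply/IH; by exists w.
Qed.

Lemma plen_cons (E : finType) (R : realFieldType) (N : {set E}) (x : E -> R) e p :
  plen N x (e :: p) = (if e \in N then x e else 0) + plen N x p.
Proof. rewrite /plen big_cons; case: (e \in N) => //; by rewrite add0r. Qed.

Lemma plen_cat (E : finType) (R : realFieldType) (N : {set E}) (x : E -> R) p q :
  plen N x (p ++ q) = plen N x p + plen N x q.
Proof. by rewrite /plen big_cat. Qed.

Lemma plen_ge0 (E : finType) (R : realFieldType) (N : {set E}) (x : E -> R) p :
  (forall e, e \in N -> 0 <= x e) -> 0 <= plen N x p.
Proof. move=> Hx; rewrite /plen; apply: sumr_ge0 => e; exact: Hx. Qed.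

Lemma len_ge0 (E : finType) (R : realFieldType) (N : {set E}) (x : E -> R) e :
  (forall e, e \in N -> 0 <= x e) -> 0 <= (if e \in N then x e else 0).
Proof. move=> Hx; case: ifP => // /Hx //. Qed.

Lemma suffix_path (V E : finType) (tl hd : E -> V) (R : realFieldType)
  (N : {set E}) (x : E -> R) :
  (forall e, e \in N -> 0 <= x e) ->
  forall p a u v, is_path tl hd a p v -> u \in a :: map hd p ->
  exists2 q, is_path tl hd u q v & plen N x q <= plen N x p.
Proof.
move=> Hx; elim=> [|f p IH] a u v.
  rewrite /is_path /= inE => /andP [/eqP -> _] /eqP ->.
  by exists [::]; rewrite /is_path /= ?eqxx.
rewrite in_cons => Hp; case/orP.
  move/eqP => ->; exists (f :: p) => //.
move=> Hu.
move: Hp; rewrite /is_path /= => /andP [/andP [_ Hw] /andP [_ Hu2]].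
have [q Hq Hl] := IH (hd f) u v (introT andP (conj Hw Hu2)) Hu.
exists q => //; rewrite plen_cons; have := len_ge0 f Hx; lra.
Qed.

Lemma shorten_walk (V E : finType) (tl hd : E -> V) (R : realFieldType)
  (N : {set E}) (x : E -> R) :
  (forall e, e \in N -> 0 <= x e) ->
  forall w u v, is_walk tl hd u w v ->
  exists2 p, is_path tl hd u p v & plen N x p <= plen N x w.
Proof.
move=> Hx; elim=> [|e w IH] u v /=.
  by move=> /eqP ->; exists [::]; rewrite /is_path /= ?eqxx.
case/andP=> /eqP He Hw.
have [p' Hp' Hl] := IH _ _ Hw.
case Hu: (u \in hd e :: map hd p').
  have [q Hq Hl2] := suffix_path Hx Hp' Hu.
  exists q => //; rewrite plen_cons; have := len_ge0 e Hx; lra.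
exists (e :: p').
  move: Hp'; rewrite /is_path /= He eqxx /= => /andP [-> ->].
  by rewrite Hu.
rewrite !plen_cons; lra.
Qed.

Lemma walk_tri (V E : finType) (tl hd : E -> V) (R : realFieldType)
  (N : {set E}) (x : E -> R) (phi : V -> R) :
  (forall e, phi (hd e) <= phi (tl e) + (if e \in N then x e else 0)) ->
  forall q u v, is_walk tl hd u q v -> phi v <= phi u + plen N x q.
Proof.
move=> H; elim=> [|e q IH] u v /=.
  by move/eqP => ->; rewrite /plen big_nil addr0.
case/andP=> /eqP He Hw; have := IH _ _ Hw; have := H e; rewrite He plen_cons; lra.
Qed.

Lemma plen_set (E : finType) (R : realFieldType) (N : {set E}) (x : E -> R) p :
  uniq p -> plen N x p = xsum x [set e | (e \in p) && (e \in N)].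
Proof.
move=> Hu; rewrite /plen /xsum -big_filter big_uniq ?filter_uniq //.
apply: eq_bigl => i; by rewrite inE mem_filter andbC.
Qed.

Lemma disj_sum (E : finType) (R : realFieldType) (N : {set E}) (x : E -> R) :
  (forall e, e \in N -> 0 <= x e) ->
  forall (F : seq (seq E)) (U : {set E}), U \subset N -> (forall p, p \in F -> uniq p) ->
  pairwise (fun p q => ~~ has (fun e => (e \in q) && (e \in N)) p) F ->
  (forall p e, p \in F -> e \in p -> e \in N -> e \in U) ->
  \sum_(p <- F) plen N x p <= xsum x U.
Proof.
move=> Hx; elim=> [|p F IH] U HU Hu Hpw HF.
  rewrite big_nil /xsum; apply: sumr_ge0 => e He; apply: Hx; exact: (subsetP HU).
rewrite big_cons.
set S := [set e | (e \in p) && (e \in N)].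
have HSU : S \subset U.
  apply/subsetP => e; rewrite inE => /andP [H1 H2]; apply: (HF p) => //; exact: mem_head.
rewrite (plen_set _ _ (Hu p (mem_head _ _))) -/S.
have -> : xsum x U = xsum x S + xsum x (U :\: S).
  by rewrite /xsum (big_setID S) /= (setIidPr HSU).
apply: lerD => //.
move: Hpw; rewrite pairwise_cons => /andP [Hall Hpw].
apply: IH => //.
- apply: subset_trans HU; exact: subsetDl.
- by move=> q Hq; apply: Hu; rewrite in_cons Hq orbT.
- move=> q e Hq He HeN; rewrite !inE HeN andbT.
  rewrite (HF q e) ?in_cons ?Hq ?orbT // andbT.
  have := allP Hall q Hq => /hasPn /(_ e).
  by case: (e \in p) => //; rewrite He HeN => /(_ isT).
Qed.

Lemma sum_ge_size (E : finType) (R : realFieldType) (N : {set E}) (x : E -> R) (F : seq (seq E)) :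
  (forall p, p \in F -> 1 <= plen N x p) -> (size F)%:R <= \sum_(p <- F) plen N x p.
Proof.
elim: F => [|p F IH] H; first by rewrite big_nil.
rewrite big_cons /= -add1n natrD; apply: lerD.
  apply: H; exact: mem_head.
by apply: IH => q Hq; apply: H; rewrite in_cons Hq orbT.
Qed.

Lemma bigmax_attained (n : nat) (P : pred 'I_n.+1) :
  P ord0 -> exists2 k : 'I_n.+1, P k & \max_(k < n.+1 | P k) k = k.
Proof.
move=> H0.
have : (\max_(k < n.+1 | P k) k = 0)%N \/ exists2 k : 'I_n.+1, P k & \max_(k < n.+1 | P k) k = k.
  apply: (big_ind (fun m => m = 0%N \/ exists2 k : 'I_n.+1, P k & m = k)).
  - by left.
  - move=> a b Ha Hb; case: (leqP a b) => Hab.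
      by [].
    by [].
  - by move=> i Pi; right; exists i.
case=> // ->; by exists ord0.
Qed.

Lemma plen_nil (E : finType) (R : realFieldType) (N : {set E}) (x : E -> R) :
  plen N x [::] = 0.
Proof. by rewrite /plen big_nil. Qed.

Lemma path_uniq (V E : finType) (tl hd : E -> V) u p v :
  is_path tl hd u p v -> uniq p.
Proof. by case/andP=> _ /= /andP [_ /map_uniq]. Qed.

Unset Implicit Arguments.
Theorem lemma8 (R : realFieldType) (V E : finType) (tl hd : E -> V) (s t : V)
    (N : {set E})
    (Hpath_ex : exists p, is_path tl hd s p t)
    (HN : forall p, is_path tl hd s p t -> has (fun e => e \in N) p)
    (Harc : forall e : E, exists2 p, is_path tl hd s p t & e \in p)
    (x : E -> R) (Hx : in_core tl hd N s t x)
    (phi : V -> R) (Hphi : is_potential tl hd N s x phi) :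
  (forall e, e \in N -> 0 <= x e + phi (tl e) - phi (hd e)) /\
  (forall e, e \notin N -> 0 <= phi (tl e) - phi (hd e)) /\
  phi s = 0 /\
  phi t = 1 /\
  (forall e,
     (exists F, N_disjoint_family tl hd N s t F /\ size F = sigmaN tl hd N s t /\
                exists2 p, p \in F & e \in p) ->
     (e \in N -> x e + phi (tl e) - phi (hd e) = 0) /\
     (e \notin N -> phi (tl e) - phi (hd e) = 0)).
Proof.
case: Hx => [Hx0 [HxN Hcore]].
have tri : forall e, phi (hd e) <= phi (tl e) + (if e \in N then x e else 0).
  move=> e; have [p Hp Hep] := Harc e.
  move: Hp; case/splitPr: Hep => p1 p2 /andP [Hw _].
  case/walk_cat: Hw => w [Hw1 /= /andP [/eqP Htl _]].
  rewrite -Htl in Hw1.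
  have [q Hq _] := shorten_walk Hx0 Hw1.
  have [[q0 Hq0 Heq] _] := Hphi (tl e) (ex_intro _ q Hq).
  have Hw' : is_walk tl hd s (q0 ++ [:: e]) (hd e).
    apply/walk_cat; exists (tl e); split; first by case/andP: Hq0.
    by rewrite /= !eqxx.
  have [r Hr Hrl] := shorten_walk Hx0 Hw'.
  have [_ Hmin] := Hphi (hd e) (ex_intro _ r Hr).
  have := Hmin r Hr; move: Hrl; rewrite plen_cat plen_cons plen_nil Heq; lra.
have Hs : phi s = 0.
  have Hs0 : is_path tl hd s [::] s by rewrite /is_path /= eqxx.
  have [[p0 Hp0 Heq] Hm] := Hphi s (ex_intro _ [::] Hs0).
  have := Hm _ Hs0; have := plen_ge0 p0 Hx0; rewrite plen_nil Heq; lra.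
have ge1 : forall p, is_path tl hd s p t -> 1 <= plen N x p.
  move=> p Hp; have Hu := path_uniq Hp; rewrite plen_set //.
  have [e0 He0 _] := hasP (HN p Hp).
  have H1 : (1 < #|E|.+1)%N by rewrite ltnS; apply/card_gt0P; exists e0.
  have HSN : [set e | (e \in p) && (e \in N)] \subset N.
    by apply/subsetP => e; rewrite inE => /andP [].
  apply: le_trans (Hcore _ HSN); rewrite ler1n /gamma_tilde; case: ifP => _.
    rewrite /sigmaN; apply: (@leq_trans (Ordinal H1)) => //.
    apply: leq_bigmax_cond; apply/asboolP; exists [:: p]; split => //.
    by split => // q; rewrite inE => /eqP ->.
  rewrite /gamma; apply: (@leq_trans (Ordinal H1)) => //.
  apply: leq_bigmax_cond; apply/asboolP; exists [:: p]; split => //.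
  split => // q; rewrite inE => /eqP ->; split => // e He.
  by rewrite !inE He /=; case: (e \in N).
have eq1 : forall F, N_disjoint_family tl hd N s t F -> size F = sigmaN tl hd N s t ->
    forall p, p \in F -> plen N x p = 1.
  move=> F [HFp Hpw] HsF p Hp.
  have Hsum := disj_sum Hx0 (subxx N) (fun q Hq => path_uniq (HFp q Hq)) Hpw
    (fun _ _ _ _ H => H).
  rewrite HxN (big_rem _ Hp) /= in Hsum.
  have Hrem := sum_ge_size (F := rem p F) (fun q Hq => ge1 q (HFp q (mem_rem Hq))).
  rewrite size_rem // in Hrem.
  have Hpos : (0 < size F)%N by case: (F) Hp.
  move: Hsum; rewrite -HsF -(prednK Hpos) -natr1.
  have := ge1 p (HFp p Hp); lra.
have [F0 [HF0 HsF0]] : exists F, N_disjoint_family tl hd N s t F /\ size F = sigmaN tl hd N s t.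
  rewrite /sigmaN.
  case: (bigmax_attained (n := #|E|) (P := fun k : 'I_#|E|.+1 =>
    `[< exists F, N_disjoint_family tl hd N s t F /\ size F = k >])).
    by apply/asboolP; exists [::]; split => //; split.
  by move=> k /asboolP [F [HF HsF]] ->; exists F.
have Ht : phi t = 1.
  have [[p0 Hp0 Heq] Hm] := Hphi t Hpath_ex.
  have Hsig : (0 < sigmaN tl hd N s t)%N.
    have [p Hp] := Hpath_ex; have [e0 He0 _] := hasP (HN p Hp).
    have H1 : (1 < #|E|.+1)%N by rewrite ltnS; apply/card_gt0P; exists e0.
    rewrite /sigmaN; apply: (@leq_trans (Ordinal H1)) => //.
    apply: leq_bigmax_cond; apply/asboolP; exists [:: p]; split => //.
    by split => // q; rewrite inE => /eqP ->.
  rewrite -HsF0 in Hsig.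
  case: F0 HF0 HsF0 Hsig => [|p1 F0'] // HF0 HsF0 _.
  have H1 := eq1 _ HF0 HsF0 p1 (mem_head _ _).
  have := Hm p1 (HF0.1 p1 (mem_head _ _)); have := ge1 p0 Hp0; rewrite H1 Heq; lra.
split.
  move=> e He; have := tri e; rewrite He; lra.
split.
  move=> e He; have := tri e; rewrite (negbTE He); lra.
do 2 (split => //).
move=> e [F [HF [HsF [p Hp Hep]]]].
have Hp1 := eq1 F HF HsF p Hp.
have Hpp := HF.1 p Hp.
move: Hp1 Hpp; case/splitPr: Hep => p1 p2 Hl /andP [Hw _].
case/walk_cat: Hw => w [Hw1 /= /andP [/eqP Htl Hw2]].
have T1 := walk_tri tri Hw1; rewrite -Htl Hs in T1.
have T2 := walk_tri tri Hw2; rewrite Ht in T2.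
rewrite plen_cat plen_cons in Hl.
have T3 := tri e.
split => HeN.
  by rewrite HeN in Hl T3; lra.
by rewrite (negbTE HeN) in Hl T3; lra.
Qed.
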